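(* For every $0\le k\le n$ and every $\pi\in S_n$, $$\chi_{\beta_{H_n^k}}(\pi)=|C_\pi|\,(n-|\mathrm{supp}(\pi)|)_k=(n-|\mathrm{supp}(\pi)|)_k\,\chi_{Conj}(\pi),$$ where $\chi_{Conj}$ is the character of the conjugacy representation of $S_n$.
   Context: Permutations are composed as functions, and $\pi\in S_n$ is identified with the permutation matrix whose $(i,j)$ entry is $1$ iff $i=\pi(j)$. For $A\in GL_n(\mathbb{Z}_2)$ let $\eta(A)$ (resp. $\theta(A)$) be the partition obtained by sorting the row sums (resp. column sums) of $A$, computed as integers, in weakly decreasing order. For $0\le k\le n$, $H_n^k=\{A\in GL_n(\mathbb{Z}_2)\mid \eta(A)=(n,n-1,\dots,n-k+1,1^{n-k}),\ \theta(A)=((k+1)^{n-k},k,k-1,\dots,1)\}$. $\beta_{H_n^k}$ is the complex permutation representation of $S_n$ on the space with basis $H_n^k$ given by $\pi\circ A=\pi A\pi^{-1}$, with character $\chi_{\beta_{H_n^k}}$. $C_\pi$ is the centralizer of $\pi$ in $S_n$, $\mathrm{supp}(\pi)$ is the set of points moved by $\pi$, and $(m)_k=m(m-1)\cdots(m-k+1)$ is the falling factorial ($(m)_0=1$, and $(m)_k=0$ if $0\le m<k$). The conjugacy representation is the permutation representation of $S_n$ acting on itself by conjugation. *)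

(* Defs.v *)
From HB Require Import structures.
From mathcomp Require Import all_boot all_order all_algebra all_fingroup algC.
Set Implicit Arguments. Unset Strict Implicit. Unset Printing Implicit Defensive.
Import GRing.Theory.
Local Open Scope ring_scope.

Notation mxF2 n := 'M['F_2]_n.

Definition pmat n (pi : 'S_n) : mxF2 n := \matrix_(i, j) (i == pi j)%:R.

Definition conj_act n (pi : 'S_n) (A : mxF2 n) : mxF2 n :=
  pmat pi *m A *m invmx (pmat pi).

(* Row and column sums computed as integers (number of nonzero entries). *)
Definition row_sums n (A : mxF2 n) : seq nat :=
  [seq (\sum_(j < n) (A i j != 0%R))%N | i <- enum 'I_n].
Definition col_sums n (A : mxF2 n) : seq nat :=
  [seq (\sum_(i < n) (A i j != 0%R))%N | j <- enum 'I_n].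

Definition eta n (A : mxF2 n) : seq nat := sort geq (row_sums A).
Definition theta n (A : mxF2 n) : seq nat := sort geq (col_sums A).

Definition eta_target n k : seq nat :=
  [seq (n - i)%N | i <- iota 0 k] ++ nseq (n - k) 1%N.
Definition theta_target n k : seq nat :=
  nseq (n - k) k.+1 ++ [seq (k - i)%N | i <- iota 0 k].

Definition H n k : {set mxF2 n} :=
  [set A : mxF2 n | [&& A \in unitmx, eta A == eta_target n k
                                    & theta A == theta_target n k]].

Definition beta_mx n k (pi : 'S_n) : 'M[algC]_#|H n k| :=
  \matrix_(a, b) (enum_val a == conj_act pi (enum_val b))%:R.
Definition chi_beta n k (pi : 'S_n) : algC := \tr (beta_mx k pi).

Definition conjrep_mx n (pi : 'S_n) : 'M[algC]_#|[set: 'S_n]| :=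
  \matrix_(a, b) (enum_val a == pi * enum_val b * pi^-1)%g%:R.
Definition chi_conj n (pi : 'S_n) : algC := \tr (conjrep_mx pi).

Definition supp n (pi : 'S_n) : {set 'I_n} := [set i | pi i != i].

(* Main.v *)
Require Import Defs.
From HB Require Import structures.
From mathcomp Require Import all_boot all_order all_algebra all_fingroup algC.
From mathcomp Require Import zify.
Set Implicit Arguments. Unset Strict Implicit. Unset Printing Implicit Defensive.
Import GRing.Theory.
Lemma sum_bool_card (T : finType) (P b : pred T) :
  (\sum_(i | P i) (b i : nat))%N = #|[set i | P i && b i]|.
Proof.
rewrite -sum1dep_card big_mkcondr /=; apply: eq_bigr => i _; by case: (b i).
Qed.

Lemma count_enum_card (T : finType) (p : pred T) : count p (enum T) = #|[set i | p i]|.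
Proof.
rewrite cardE /enum_mem size_filter /= count_filter; apply: eq_count => x.
by rewrite !inE /= andbT.
Qed.

Lemma card1_uniq (T : finType) (p : pred T) x y :
  #|[set i | p i]| = 1%N -> p x -> p y -> x = y.
Proof.
move=> H px py; have /card_le1_eqP : #|[set i | p i]| <= 1 by rewrite H.
by apply; rewrite inE.
Qed.

Lemma sum_ltm m k : (\sum_(b < k) (b < m : nat))%N = minn m k.
Proof.
elim: k => [|k IH]; first by rewrite big_ord0 minn0.
rewrite big_ord_recr /= IH; case: (ltnP k m) => H; lia.
Qed.

Lemma sum_lt k a : (\sum_(b < k) (a + b < k : nat))%N = k - a.
Proof.
have -> : (k - a = minn (k - a) k)%N by lia.
rewrite -sum_ltm; apply: eq_bigr => b _.
by rewrite ltn_subRL.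
Qed.

Lemma sum_eq_le (I : finType) (f g : I -> nat) :
  (forall i, g i <= f i) -> (\sum_i f i <= \sum_i g i)%N -> forall i, f i = g i.
Proof.
move=> le H i; apply/eqP; rewrite eqn_leq le andbT; apply: contraLR H; rewrite -!ltnNge => lt.
rewrite (bigD1 i) //= [X in (_ < X)%N](bigD1 i) //=.
have := @leq_sum _ (index_enum I) (fun j => j != i) _ _ (fun j _ => le j); lia.
Qed.

Lemma weight_sum k (y : 'I_k -> 'I_k -> bool) :
 (forall a : 'I_k, (\sum_(b < k) (y a b : nat))%N = k - a) ->
 (forall b : 'I_k, (\sum_(a < k) (y a b : nat))%N = k - b) ->
 (\sum_(a < k) \sum_(b < k) (y a b * (a + b)))%N =
   (\sum_(a < k) (k - a) * a + \sum_(b < k) (k - b) * b)%N.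
Proof.
move=> Hr Hc.
rewrite (eq_bigr (fun a => \sum_(b < k) (y a b * a) + \sum_(b < k) (y a b * b))%N); last first.
  by move=> a _; rewrite -big_split /=; apply: eq_bigr => b _; rewrite mulnDr.
rewrite big_split /=; congr (_ + _)%N.
  by apply: eq_bigr => a _; rewrite -big_distrl /= Hr.
rewrite exchange_big /=; apply: eq_bigr => b _; by rewrite -big_distrl /= Hc.
Qed.

Lemma staircase k (x : 'I_k -> 'I_k -> bool) :
 (forall a : 'I_k, (\sum_(b < k) (x a b : nat))%N = k - a) ->
 (forall b : 'I_k, (\sum_(a < k) (x a b : nat))%N = k - b) ->
 forall a b, x a b = (a + b < k)%N.
Proof.
move=> Hr Hc.
pose S (a b : 'I_k) := (a + b < k)%N.
have Sr : forall a : 'I_k, (\sum_(b < k) (S a b : nat))%N = k - a by move=> a; exact: sum_lt.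
have Sc : forall b : 'I_k, (\sum_(a < k) (S a b : nat))%N = k - b.
  by move=> b; rewrite -(sum_lt k b); apply: eq_bigr => a _; rewrite /S addnC.
have Wx := weight_sum Hr Hc; have WS := weight_sum Sr Sc.
have Tx : (\sum_(a < k) \sum_(b < k) (x a b : nat))%N = (\sum_(a < k) (k - a))%N.
  by apply: eq_bigr => a _; rewrite Hr.
have TS : (\sum_(a < k) \sum_(b < k) (S a b : nat))%N = (\sum_(a < k) (k - a))%N.
  by apply: eq_bigr => a _; rewrite Sr.
pose f (y z : 'I_k -> 'I_k -> bool) a b := (y a b * (2 * (a + b) + 1) + z a b * (2 * k))%N.
have Ef : forall y z : 'I_k -> 'I_k -> bool, (\sum_(a < k) \sum_(b < k) f y z a b)%N =
   (2 * \sum_(a < k) \sum_(b < k) (y a b * (a + b)) + \sum_(a < k) \sum_(b < k) (y a b : nat)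
    + 2 * k * \sum_(a < k) \sum_(b < k) (z a b : nat))%N.
  move=> y z; rewrite !big_distrr -!big_split /=; apply: eq_bigr => a _.
  rewrite !big_distrr -!big_split /=; apply: eq_bigr => b _.
  rewrite /f; lia.
have le1 : forall a b, f S x a b <= f x S a b.
  move=> a b; rewrite /f /S; case: (x a b); case: ltnP => H /=; lia.
have le2 : forall a, (\sum_(b < k) f S x a b <= \sum_(b < k) f x S a b)%N.
  by move=> a; apply: leq_sum => b _; exact: le1.
have E1 := sum_eq_le le2.
have E1' : forall a, (\sum_(b < k) f x S a b)%N = (\sum_(b < k) f S x a b)%N.
  apply: E1; rewrite !Ef Wx WS Tx TS; lia.
move=> a b.
have := sum_eq_le (le1 a) _ b; rewrite E1' => /(_ (leqnn _)).
rewrite /f /S; case: (x a b); case: ltnP => H /=; lia.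
Qed.

Lemma big_split_inj (R : Type) (idx : R) (op : Monoid.com_law idx) n k
   (r : 'I_k -> 'I_n) (F : 'I_n -> R) : injective r ->
  \big[op/idx]_(i < n) F i =
    op (\big[op/idx]_(a < k) F (r a)) (\big[op/idx]_(i | i \notin codom r) F i).
Proof.
move=> inj; rewrite (bigID (mem (codom r))) /=; congr (op _ _).
rewrite -big_uniq; last by rewrite codomE map_inj_uniq // enum_uniq.
by rewrite big_image.
Qed.

Section PsiSec.
Variables n k : nat.
Local Notation M := (mxF2 n).
Implicit Types (r : {ffun 'I_k -> 'I_n}) (s : 'S_n) (a b : 'I_k) (i j : 'I_n).

Definition rsum (A : M) (i : 'I_n) := (\sum_(j < n) (A i j != 0%R))%N.
Definition csum (A : M) (j : 'I_n) := (\sum_(i < n) (A i j != 0%R))%N.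

Definition rinv (r : {ffun 'I_k -> 'I_n}) (i : 'I_n) : option 'I_k := [pick a | r a == i].

Lemma rinv_r r a : injective r -> rinv r (r a) = Some a.
Proof.
move=> inj; rewrite /rinv; case: pickP => [b /eqP/inj -> //|/(_ a)]; by rewrite eqxx.
Qed.

Lemma rinv_None r i : i \notin codom r -> rinv r i = None.
Proof. by move=> H; rewrite /rinv; case: pickP => // b /eqP Hb; rewrite -Hb codom_f in H. Qed.

Lemma card_notcodom r : injective r -> #|[set i | i \notin codom r]| = (n - k)%N.
Proof.
move=> inj; have := cardC (mem (codom r)); rewrite card_codom // !card_ord => E.
have -> : #|[set i | i \notin codom r]| = #|[predC mem (codom r)]| by apply: eq_card => i; rewrite !inE.
move: E; move: #|[predC mem (codom r)]| => c; lia.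
Qed.

Lemma k_le_n r : injective r -> (k <= n)%N.
Proof. move=> inj; have := leq_card _ inj; by rewrite !card_ord. Qed.

Definition psib (s : 'S_n) r (i j : 'I_n) : bool :=
  match rinv r i with
  | Some a => if rinv r (s^-1 j)%g is Some b then (a + b < k)%N else true
  | None => j == s i
  end.

Definition Psi s r : M := \matrix_(i, j) (psib s r i j)%:R%R.

Lemma F2_ne0 (b : bool) : (((b%:R)%R : 'F_2) != 0%R) = b.
Proof. by case: b; rewrite ?eqxx ?oner_neq0. Qed.

Lemma Psi_ne0 s r i j : (Psi s r i j != 0)%R = psib s r i j.
Proof. by rewrite mxE F2_ne0. Qed.

Lemma psib_s s r i j : psib s r i (s j) =
  match rinv r i with
  | Some a => if rinv r j is Some b then (a + b < k)%N else true
  | None => j == i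
  end.
Proof. by rewrite /psib permK (inj_eq (@perm_inj _ s)). Qed.

Lemma rsPsi_r s r a : injective r -> rsum (Psi s r) (r a) = (n - a)%N.
Proof.
move=> inj; rewrite /rsum (reindex_inj (@perm_inj _ s)) /=.
rewrite (big_split_inj _ _ inj) /=.
rewrite (eq_bigr (fun b : 'I_k => (a + b < k)%N : nat)); last first.
  by move=> b _; rewrite Psi_ne0 psib_s !rinv_r.
rewrite sum_lt (eq_bigr (fun _ => 1%N)); last first.
  by move=> i Hi; rewrite Psi_ne0 psib_s rinv_r // rinv_None.
rewrite sum1dep_card card_notcodom //; have := k_le_n inj; have := ltn_ord a; lia.
Qed.

Lemma rsPsi_u s r i : injective r -> i \notin codom r -> rsum (Psi s r) i = 1%N.
Proof.
move=> inj Hi; rewrite /rsum (bigD1 (s i)) //= Psi_ne0 psib_s rinv_None // eqxx big1 //.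
by move=> j Hj; rewrite Psi_ne0 /psib rinv_None // (negbTE Hj).
Qed.

Lemma csPsi_r s r b : injective r -> csum (Psi s r) (s (r b)) = (k - b)%N.
Proof.
move=> inj; rewrite /csum (big_split_inj _ _ inj) /=.
rewrite (eq_bigr (fun a : 'I_k => (a + b < k)%N : nat)); last first.
  by move=> a _; rewrite Psi_ne0 psib_s !rinv_r.
have -> : (\sum_(a < k) (a + b < k : nat) = k - b)%N.
  by rewrite -(sum_lt k b); apply: eq_bigr => a _; rewrite addnC.
rewrite big1 ?addn0 //.
move=> i Hi; rewrite Psi_ne0 psib_s rinv_None //; case: eqP => // E.
by move: Hi; rewrite -E codom_f.
Qed.

Lemma csPsi_u s r j : injective r -> j \notin codom r -> csum (Psi s r) (s j) = k.+1.
Proof.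
move=> inj Hj; rewrite /csum (big_split_inj _ _ inj) /=.
rewrite (eq_bigr (fun _ => 1%N)); last by move=> a _; rewrite Psi_ne0 psib_s rinv_r // rinv_None.
rewrite sum1_card card_ord (bigD1 j) //= Psi_ne0 psib_s rinv_None // eqxx big1 ?addn0 ?addn1 //.
move=> i /andP [Hi Hij]; rewrite Psi_ne0 psib_s rinv_None //; by rewrite eq_sym (negbTE Hij).
Qed.

End PsiSec.

Section Unit.
Variables n k : nat.
Implicit Types (r : {ffun 'I_k -> 'I_n}) (s : 'S_n).
Local Open Scope ring_scope.

Lemma Psi_unit s r : injective r -> Psi s r \in unitmx.
Proof.
move=> inj; rewrite unitmxE unitfE; apply/det0P => [[v nv0 vP]]; move/negP: nv0; apply.
have Hc : forall j, \sum_i v 0 i * (psib s r i (s j))%:R = 0.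
  move=> j; transitivity ((v *m Psi s r) 0 (s j)); last by rewrite vP mxE.
  by rewrite mxE; apply: eq_bigr => i _; rewrite mxE.
have Hr : forall a, v 0 (r a) = 0.
  suff H : forall m (a : 'I_k), (a < m)%N -> v 0 (r a) = 0 by move=> a; exact: (H a.+1).
  elim=> [//|m IH] a Ham.
  have Hb : (k - a.+1 < k)%N by have := ltn_ord a; lia.
  have := Hc (r (Ordinal Hb)); rewrite (big_split_inj _ _ inj) /=.
  rewrite [X in _ + X]big1 ?addr0; last first.
    move=> i Hi; rewrite psib_s rinv_None //; case: eqP => [E|_]; last by rewrite mulr0.
    by move: Hi; rewrite -E codom_f.
  rewrite (bigD1 a) //= psib_s !rinv_r // big1 ?addr0.
    have -> : (a + Ordinal Hb < k)%N by rewrite /=; have := ltn_ord a; lia.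
    by rewrite mulr1.
  move=> a' Ha'; rewrite psib_s !rinv_r //=.
  case: (ltnP a' a) => H.
    by rewrite IH ?mul0r //; lia.
  have -> : (a' + Ordinal Hb < k)%N = false.
    rewrite /=.
    have : (a' != a :> nat) by []. have := ltn_ord a'; lia.
  by rewrite mulr0.
apply/eqP/matrixP => i0 j; rewrite !mxE (ord1 i0).
case: (boolP (j \in codom r)) => [/codomP [a ->]|Hj]; first exact: Hr.
have := Hc j; rewrite (big_split_inj _ _ inj) /= big1 ?add0r; last by move=> a _; rewrite Hr mul0r.
rewrite (bigD1 j) //= psib_s rinv_None // eqxx mulr1 big1 ?addr0 //.
move=> i /andP [Hi Hij]; by rewrite psib_s rinv_None // eq_sym (negbTE Hij) mulr0.
Qed.

End Unit.

Section Conj.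
Local Open Scope ring_scope.

Lemma pmat_perm n (pi : 'S_n) : pmat pi = perm_mx pi^-1%g.
Proof.
apply/matrixP => i j; rewrite !mxE; congr (_%:R).
by rewrite -(inj_eq (@perm_inj _ pi) (pi^-1%g i)) permKV.
Qed.

Lemma invmx_perm n (s : 'S_n) : invmx (perm_mx s : 'M['F_2]_n) = perm_mx s^-1%g.
Proof.
have E : (perm_mx s : 'M['F_2]_n) *m perm_mx s^-1%g = 1%:M by rewrite -perm_mxM mulgV perm_mx1.
have [U _] := mulmx1_unit E.
by rewrite -[RHS](mulKmx U) E mulmx1.
Qed.

Lemma conj_actE n (pi : 'S_n) A i j : conj_act pi A i j = A (pi^-1%g i) (pi^-1%g j).
Proof.
rewrite /conj_act pmat_perm invmx_perm invgK.
have -> : perm_mx pi = perm_mx (pi^-1%g)^-1%g by rewrite invgK.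
by rewrite -col_permE -row_permE !mxE.
Qed.

Lemma conj_fixE n (pi : 'S_n) A :
  (conj_act pi A == A) = [forall i, forall j, A (pi i) (pi j) == A i j].
Proof.
apply/eqP/forallP => [E i|H]; last first.
  apply/matrixP => i j; rewrite conj_actE; move/forallP/(_ (pi^-1%g j))/eqP: (H (pi^-1%g i)).
  by rewrite !permKV => <-.
apply/forallP => j; apply/eqP; by rewrite -{1}E conj_actE !permK.
Qed.

Lemma sum_bool_R (T : finType) (P : {pred T}) (b : pred T) :
  \sum_(x in P) (b x)%:R = #|[set x in P | b x]|%:R :> algC.
Proof.
rewrite -natr_sum; congr (_%:R); rewrite sum_bool_card; apply: eq_card => x.
by rewrite !inE.
Qed.

Lemma chi_beta_card n k (pi : 'S_n) :
  chi_beta k pi = #|[set A in H n k | conj_act pi A == A]|%:R.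
Proof.
rewrite /chi_beta /mxtrace /beta_mx.
rewrite (eq_bigr (fun a => (enum_val a == conj_act pi (enum_val a))%:R)); last by move=> a _; rewrite mxE.
rewrite -(big_enum_val (fun A => (A == conj_act pi A)%:R)) /= sum_bool_R.
congr (_%:R); apply: eq_card => A; by rewrite !inE [A == _]eq_sym.
Qed.

Lemma chi_conj_card n (pi : 'S_n) : chi_conj pi = #|'C[pi]%g|%:R.
Proof.
rewrite /chi_conj /mxtrace /conjrep_mx.
rewrite (eq_bigr (fun a => (enum_val a == pi * enum_val a * pi^-1%g)%g%:R)); last by move=> a _; rewrite mxE.
rewrite -(big_enum_val (fun x => (x == pi * x * pi^-1%g)%g%:R)) /= sum_bool_R.
congr (_%:R); apply: eq_card => x; rewrite inE [in RHS]cent1E /=.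
rewrite in_setT /= -[LHS](inj_eq (mulIg pi)) mulgKV. by [].
Qed.

End Conj.

Lemma sort_geq_perm (s t : seq nat) : sorted geq t -> (sort geq s == t) = perm_eq s t.
Proof.
move=> St; apply/eqP/idP => [<-|P].
  by rewrite perm_sym perm_sort perm_refl.
rewrite -(sorted_sort (leT := geq) _ St); last by move=> x y z; lia.
apply/perm_sortP => //; [by move=> x y; apply: leq_total | by move=> x y z; lia |].
by move=> x y; lia.
Qed.

Lemma map_cst (T : eqType) (f : T -> nat) c s : (forall x, x \in s -> f x = c) -> map f s = nseq (size s) c.
Proof. elim: s => //= x s IH H; rewrite H ?mem_head // IH // => y Hy; apply: H; by rewrite in_cons Hy orbT. Qed.

Lemma eta_target_map n k : (k <= n)%N ->
  eta_target n k = map (fun i => if (i < k)%N then n - i else 1%N) (iota 0 n).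
Proof.
move=> kn; have E : n = (k + (n - k))%N by lia.
rewrite [in iota 0 n]E iotaD map_cat /eta_target add0n; congr (_ ++ _).
  by apply/eq_in_map => i; rewrite mem_iota => /andP [_ ->].
rewrite (@map_cst _ _ 1%N) ?size_iota // => i; rewrite mem_iota => /andP [H _]; by rewrite ltnNge H.
Qed.

Lemma theta_target_map n k : (k <= n)%N ->
  theta_target n k = map (fun i => if (i < n - k)%N then k.+1 else k - (i - (n - k)))%N (iota 0 n).
Proof.
move=> kn; have E : n = ((n - k) + k)%N by lia.
rewrite [in iota 0 n]E iotaD map_cat /theta_target add0n; congr (_ ++ _).
  rewrite (@map_cst _ _ k.+1) ?size_iota // => i; by rewrite mem_iota => /andP [_ ->].
rewrite -[n - k]addn0 iotaDl -map_comp addn0; apply: eq_map => i /=.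
by rewrite ltnNge leq_addr /= addKn.
Qed.

Lemma eta_sorted n k : (k <= n)%N -> sorted geq (eta_target n k).
Proof.
move=> kn; rewrite eta_target_map //; apply: (homo_sorted (e := leq)) (iota_sorted 0 n).
move=> x y le; case: ltnP => H1; case: ltnP => H2 /=; lia.
Qed.

Lemma theta_sorted n k : (k <= n)%N -> sorted geq (theta_target n k).
Proof.
move=> kn; rewrite theta_target_map //; apply: (homo_sorted (e := leq)) (iota_sorted 0 n).
move=> x y le; case: ltnP => H1; case: ltnP => H2 /=; lia.
Qed.

Lemma eta_count n k a : (a < k)%N -> (k <= n)%N -> count_mem (n - a)%N (eta_target n k) = 1%N.
Proof.
move=> ak kn; rewrite /eta_target count_cat count_nseq count_map.
rewrite (@eq_in_count _ _ (pred1 a)); last first.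
  by move=> i; rewrite mem_iota /= => Hi; apply/eqP/eqP; lia.
rewrite count_uniq_mem ?iota_uniq // mem_iota /=.
case: eqP => /= H; lia.
Qed.

Lemma theta_count n k b : (b < k)%N -> (k <= n)%N -> count_mem (k - b)%N (theta_target n k) = 1%N.
Proof.
move=> bk kn; rewrite /theta_target count_cat count_nseq count_map.
rewrite (@eq_in_count _ _ (pred1 b)); last first.
  by move=> i; rewrite mem_iota /= => Hi; apply/eqP/eqP; lia.
rewrite count_uniq_mem ?iota_uniq // mem_iota /=.
case: eqP => /= H; lia.
Qed.

Lemma eta_mem n k v : v \in eta_target n k -> v = 1%N \/ exists2 a, (a < k)%N & v = (n - a)%N.
Proof.
rewrite mem_cat => /orP [/mapP [a] | ]; last by rewrite mem_nseq => /andP [_ /eqP]; left.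
by rewrite mem_iota => /andP [_ H] ->; right; exists a.
Qed.

Lemma theta_mem n k v : v \in theta_target n k -> v = k.+1 \/ exists2 b, (b < k)%N & v = (k - b)%N.
Proof.
rewrite mem_cat => /orP [ | /mapP [b]]; first by rewrite mem_nseq => /andP [_ /eqP]; left.
by rewrite mem_iota => /andP [_ H] ->; right; exists b.
Qed.

Lemma sum0_term (I : finType) (P : pred I) (F : I -> nat) i :
  P i -> (\sum_(j | P j) F j)%N = 0%N -> F i = 0%N.
Proof. by move=> Pi; rewrite (bigD1 i) //=; lia. Qed.

Lemma sum_ge1 (I : finType) (P : pred I) (F : I -> nat) :
  (forall i, P i -> 1 <= F i)%N -> (\sum_(i | P i) F i <= #|[set i | P i]|)%N ->
  forall i, P i -> F i = 1%N.
Proof.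
move=> H1 Hs i Pi.
have E : (\sum_(j | P j) F j = \sum_(j | P j) (F j - 1) + \sum_(j | P j) 1)%N.
  rewrite -big_split /=; apply: eq_bigr => j Pj; have := H1 j Pj; lia.
rewrite E sum1dep_card in Hs.
have : (\sum_(j | P j) (F j - 1))%N = 0%N by lia.
move/(sum0_term Pi); have := H1 i Pi; lia.
Qed.

Lemma sum_bool_full (I : finType) (b : pred I) :
  (\sum_i (b i : nat))%N = #|I| -> forall i, b i.
Proof.
move=> H i; have E : (\sum_(i | true) (b i : nat))%N = #|I| by [].
rewrite sum_bool_card in E.
have /eqP S : [set i | true && b i] == setT by rewrite eqEcard subsetT cardsT /= E.
by have := in_setT i; rewrite -S inE.
Qed.

Lemma sum_bool_le (I : finType) (b : pred I) : (\sum_i (b i : nat) <= #|I|)%N.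
Proof. rewrite -sum1_card; apply: leq_sum => i _; by case: (b i). Qed.

Lemma F2_01 (x : 'F_2) : x = ((x != 0%R)%:R)%R.
Proof. by case: x => [[|[|m]] Hm] //=; apply/val_inj. Qed.

Section PsiPerm.
Variables n k : nat.
Implicit Types (r : {ffun 'I_k -> 'I_n}) (s : 'S_n).

Lemma rinv_Some r i a : rinv r i = Some a -> i = r a.
Proof. by rewrite /rinv; case: pickP => // b /eqP <- [->]. Qed.

Lemma rinv_NoneP r i : (rinv r i == None) = (i \notin codom r).
Proof.
case: (boolP (i \in codom r)) => [/codomP [a ->]|H]; last by rewrite rinv_None.
rewrite /rinv; case: pickP => // /(_ a); by rewrite eqxx.
Qed.

Lemma perm_enum_split r : injective r ->
  perm_eq (enum 'I_n) (map r (enum 'I_k) ++ [seq i <- enum 'I_n | i \notin codom r]).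
Proof.
move=> inj; apply: uniq_perm; first exact: enum_uniq.
  rewrite cat_uniq map_inj_uniq // enum_uniq filter_uniq ?enum_uniq // andbT /=.
  apply/hasPn => i; rewrite mem_filter => /andP [H _]; by rewrite -codomE.
move=> i; rewrite mem_enum mem_cat mem_filter mem_enum -codomE; by case: (i \in codom r).
Qed.

Lemma perm_enum_perm s : perm_eq (enum 'I_n) (map s (enum 'I_n)).
Proof.
apply: uniq_perm; [exact: enum_uniq | rewrite map_inj_uniq; [exact: enum_uniq | exact: perm_inj] |].
move=> i; rewrite mem_enum -(permKV s i) map_f // mem_enum //.
Qed.

Lemma size_notcodom r : injective r -> size [seq i <- enum 'I_n | i \notin codom r] = (n - k)%N.
Proof. by move=> inj; rewrite size_filter count_enum_card card_notcodom. Qed.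

Lemma Psi_rows s r : injective r -> perm_eq (row_sums (Psi s r)) (eta_target n k).
Proof.
move=> inj; change (perm_eq (map (rsum (Psi s r)) (enum 'I_n)) (eta_target n k)).
rewrite (permPl (perm_map _ (perm_enum_split inj))) map_cat.
rewrite [X in _ ++ X](@map_cst _ _ 1%N); last by move=> i; rewrite mem_filter => /andP [H _]; exact: rsPsi_u.
rewrite size_notcodom // -map_comp.
rewrite (eq_map (g := fun a : 'I_k => n - a)%N); last by move=> a /=; exact: rsPsi_r.
by rewrite /eta_target -val_enum_ord -map_comp.
Qed.

Lemma Psi_cols s r : injective r -> perm_eq (col_sums (Psi s r)) (theta_target n k).
Proof.
move=> inj; change (perm_eq (map (csum (Psi s r)) (enum 'I_n)) (theta_target n k)).
rewrite (permPl (perm_map _ (perm_enum_perm s))) -map_comp.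
rewrite (permPl (perm_map _ (perm_enum_split inj))) map_cat perm_catC.
rewrite (@map_cst _ _ k.+1); last by move=> i; rewrite mem_filter => /andP [H _]; exact: csPsi_u.
rewrite size_notcodom // -map_comp.
rewrite (eq_map (g := fun a : 'I_k => k - a)%N); last by move=> a /=; exact: csPsi_r.
by rewrite /theta_target -val_enum_ord -map_comp.
Qed.

Lemma Psi_H s r : injective r -> Psi s r \in H n k.
Proof.
move=> inj; have kn := k_le_n inj.
rewrite inE Psi_unit // /Defs.eta /theta !sort_geq_perm ?eta_sorted ?theta_sorted //.
by rewrite Psi_rows ?Psi_cols.
Qed.

End PsiPerm.

Section Struct.
Variables (n k : nat) (A : mxF2 n).
Hypotheses (kn : (k <= n)%N) (He : perm_eq (row_sums A) (eta_target n k))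
  (Ht : perm_eq (col_sums A) (theta_target n k)).

Lemma rs_card v : #|[set i | rsum A i == v]| = count_mem v (eta_target n k).
Proof. by rewrite -(seq.permP He) /row_sums count_map count_enum_card. Qed.

Lemma cs_card v : #|[set i | csum A i == v]| = count_mem v (theta_target n k).
Proof. by rewrite -(seq.permP Ht) /col_sums count_map count_enum_card. Qed.

Lemma rs_uniq a i i' : (a < k)%N -> rsum A i = (n - a)%N -> rsum A i' = (n - a)%N -> i = i'.
Proof.
move=> ak E E'; apply: (@card1_uniq _ (fun i => rsum A i == n - a)%N).
- by rewrite rs_card eta_count.
- by rewrite E.
- by rewrite E'.
Qed.

Lemma cs_uniq b j j' : (b < k)%N -> csum A j = (k - b)%N -> csum A j' = (k - b)%N -> j = j'.
Proof.
move=> bk E E'; apply: (@card1_uniq _ (fun j => csum A j == k - b)%N).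
- by rewrite cs_card theta_count.
- by rewrite E.
- by rewrite E'.
Qed.

Lemma rs_ex a : (a < k)%N -> exists i, rsum A i = (n - a)%N.
Proof.
move=> ak; have : (0 < #|[set i | rsum A i == n - a]|)%N by rewrite rs_card eta_count.
by case/card_gt0P => i; rewrite inE => /eqP; exists i.
Qed.

Lemma cs_ex b : (b < k)%N -> exists j, csum A j = (k - b)%N.
Proof.
move=> bk; have : (0 < #|[set j | csum A j == k - b]|)%N by rewrite cs_card theta_count.
by case/card_gt0P => j; rewrite inE => /eqP; exists j.
Qed.

Lemma rs_mem i : rsum A i = 1%N \/ exists2 a, (a < k)%N & rsum A i = (n - a)%N.
Proof. apply: eta_mem; rewrite -(perm_mem He); exact: (map_f (rsum A) (mem_enum _ i)). Qed.

Lemma cs_mem j : csum A j = k.+1 \/ exists2 b, (b < k)%N & csum A j = (k - b)%N.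
Proof. apply: (@theta_mem n); rewrite -(perm_mem Ht); exact: (map_f (csum A) (mem_enum _ j)). Qed.

Lemma struct_ex : exists s (r : {ffun 'I_k -> 'I_n}), injective r /\ A = Psi s r.
Proof.
have [rr0 Hrr0] := @fin_all_exists _ (fun _ => 'I_n) (fun (a : 'I_k) i => rsum A i = (n - a)%N)
  (fun a => rs_ex (ltn_ord a)).
have [dd0 Hdd0] := @fin_all_exists _ (fun _ => 'I_n) (fun (b : 'I_k) j => csum A j = (k - b)%N)
  (fun b => cs_ex (ltn_ord b)).
pose rr : {ffun 'I_k -> 'I_n} := [ffun a => rr0 a]; pose dd : {ffun 'I_k -> 'I_n} := [ffun b => dd0 b].
have Hrr : forall a, rsum A (rr a) = (n - a)%N by move=> a; rewrite ffunE.
have Hdd : forall b, csum A (dd b) = (k - b)%N by move=> b; rewrite ffunE.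
have rinj : injective rr.
  move=> a a' E; apply: ord_inj; have := Hrr a; rewrite E Hrr.
  have := ltn_ord a; have := ltn_ord a'; lia.
have dinj : injective dd.
  move=> a a' E; apply: ord_inj; have := Hdd a; rewrite E Hdd.
  have := ltn_ord a; have := ltn_ord a'; lia.
have R1 : forall i, i \notin codom rr -> rsum A i = 1%N.
  move=> i Hi; case: (rs_mem i) => // [[a Ha E]].
  have := rs_uniq Ha E (Hrr (Ordinal Ha)) => Ei.
  by move: Hi; rewrite Ei codom_f.
have C1 : forall j, j \notin codom dd -> csum A j = k.+1.
  move=> j Hj; case: (cs_mem j) => // [[b Hb E]].
  have := cs_uniq Hb E (Hdd (Ordinal Hb)) => Ej.
  by move: Hj; rewrite Ej codom_f.
pose nz i j := (A i j != 0%R).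
pose u j := (\sum_(i | i \notin codom rr) (nz i j : nat))%N.
pose h j := (\sum_(a < k) (nz (rr a) j : nat))%N.
have hk : forall j, (h j <= k)%N by move=> j; have := sum_bool_le (fun a => nz (rr a) j); rewrite card_ord.
have csE : forall j, csum A j = (h j + u j)%N by move=> j; rewrite /csum (big_split_inj _ _ rinj).
have Su : (\sum_j u j)%N = (n - k)%N.
  rewrite /u exchange_big /= -(card_notcodom rinj) -sum1dep_card.
  by apply: eq_bigr => i Hi; rewrite -(R1 i Hi).
have u1 : forall j, j \notin codom dd -> (1 <= u j)%N.
  move=> j Hj; have := csE j; rewrite C1 //; have := hk j; lia.
have Su2 := Su; rewrite (big_split_inj _ _ dinj) /= in Su2.
have Sge : (n - k <= \sum_(i < n | i \notin codom dd) u i)%N.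
  rewrite -(card_notcodom dinj) -sum1dep_card; exact: leq_sum.
have U0 : forall b, u (dd b) = 0%N.
  move=> b; have S0 : (\sum_(a < k) u (dd a) = 0)%N.
    move: Su2 Sge; set Y := (\sum_(i < n | i \notin codom dd) u i)%N; set X := (\sum_(a < k) u (dd a))%N.
    lia.
  exact: (@sum0_term _ predT (fun b => u (dd b)) b isT S0).
have U1 : forall j, j \notin codom dd -> u j = 1%N.
  have Y1 : (\sum_(i < n | i \notin codom dd) u i = n - k)%N.
    by move: Su2; rewrite big1 ?add0n.
  apply: sum_ge1 => //; rewrite card_notcodom //. by rewrite Y1.
have N0 : forall i b, i \notin codom rr -> nz i (dd b) = false.
  move=> i b Hi; case Hnz: (nz i (dd b)) => //.
  have := U0 b; rewrite /u (bigD1 i) //= Hnz => E; exfalso; move: E; lia.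
have Hfull : forall j a, j \notin codom dd -> nz (rr a) j.
  move=> j a Hj; apply: (@sum_bool_full _ (fun a => nz (rr a) j)); rewrite card_ord.
  have := csE j; rewrite C1 // U1 // => E; have Eh : h j = k by lia.
  exact: Eh.
have Uu : forall j i i', j \notin codom dd -> i \notin codom rr -> i' \notin codom rr ->
    nz i j -> nz i' j -> i = i'.
  move=> j x x' Hj Hx Hx' n1 n2.
  have := U1 j Hj; rewrite /u sum_bool_card => E.
  apply: (card1_uniq (p := fun i => (i \notin codom rr) && nz i j)) => //; exact/andP.
have Ru : forall i j j', i \notin codom rr -> nz i j -> nz i j' -> j = j'.
  move=> i j j' Hi n1 n2.
  have := R1 i Hi; rewrite /rsum -(big_mkcond (fun _ => true)) => E.
  have E' : (\sum_(j | true) (nz i j : nat))%N = 1%N by [].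
  rewrite sum_bool_card in E'.
  exact: (card1_uniq (p := fun j => true && nz i j)).
have Nex : forall i, i \notin codom rr -> exists j, nz i j.
  move=> i Hi; have := R1 i Hi => E.
  have E' : (\sum_(j | true) (nz i j : nat))%N = 1%N by [].
  rewrite sum_bool_card in E'.
  have : (0 < #|[set j | true && nz i j]|)%N by rewrite E'.
  by case/card_gt0P => j; rewrite inE => Hj; exists j.
have Pex : forall i, exists j, if rinv rr i is Some a then j = dd a else nz i j.
  move=> i; case E: (rinv rr i) => [a|]; first by exists (dd a).
  apply: Nex; by rewrite -rinv_NoneP E.
have [g Hg] := @fin_all_exists _ (fun _ => 'I_n)
  (fun i j => if rinv rr i is Some a then j = dd a else nz i j) Pex.
have gND : forall i, i \notin codom rr -> g i \notin codom dd.
  move=> i Hi; have := Hg i; rewrite rinv_None // => Hn.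
  apply/negP => /codomP [b Eb]; by rewrite Eb N0 in Hn.
have ginj : injective g.
  move=> i i' E; have := Hg i; have := Hg i'.
  case Ei: (rinv rr i) => [a|]; case Ei': (rinv rr i') => [a'|].
  - move=> H1 H2; rewrite (rinv_Some Ei) (rinv_Some Ei'); congr (rr _); apply: dinj.
    by rewrite -H1 -H2.
  - move=> H1 H2; have Hi' : i' \notin codom rr by rewrite -rinv_NoneP Ei'.
    by move: H1; rewrite -E H2 N0.
  - move=> H1 H2; have Hi : i \notin codom rr by rewrite -rinv_NoneP Ei.
    by move: H2; rewrite E H1 N0.
  - move=> H1 H2; have Hi : i \notin codom rr by rewrite -rinv_NoneP Ei.
    have Hi' : i' \notin codom rr by rewrite -rinv_NoneP Ei'.
    apply: (Uu (g i)) => //; first exact: gND.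
    by rewrite E.
pose s := perm ginj.
have sE : forall i, s i = g i by move=> i; rewrite permE.
exists s, rr; split => //.
apply/matrixP => i j; rewrite -(permKV s j); set j' := (s^-1)%g j.
rewrite mxE [LHS]F2_01; congr (_%:R)%R; rewrite psib_s -/(nz _ _).
case Ei: (rinv rr i) => [a|]; last first.
  have Hi : i \notin codom rr by rewrite -rinv_NoneP Ei.
  case: (eqVneq j' i) => [->|Hne]; first by have := Hg i; rewrite Ei sE => ->.
  case Hn: (nz i (s j')) => //; have := Hg i; rewrite Ei => Hgi.
  have := Ru i _ _ Hi Hn Hgi; rewrite -sE => /perm_inj E.
  by rewrite E eqxx in Hne.
rewrite (rinv_Some Ei).
case Ej: (rinv rr j') => [b|].
  rewrite (rinv_Some Ej) sE; have := Hg (rr b); rewrite rinv_r // => ->.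
  congr (nat_of_bool _); refine (@staircase k (fun a b => nz (rr a) (dd b)) _ _ a b).
  + move=> a0; have := Hrr a0; rewrite /rsum (big_split_inj _ _ dinj) /=.
    rewrite [X in _ + X](eq_bigr (fun _ => 1%N)); last by move=> j0 Hj0; exact: (congr1 nat_of_bool (Hfull j0 a0 Hj0)).
    rewrite sum1dep_card card_notcodom // /nz; have := ltn_ord a0; lia.
  + move=> b0; have := Hdd b0; rewrite csE U0 addn0; by [].
have Hj' : j' \notin codom rr by rewrite -rinv_NoneP Ej.
by rewrite sE Hfull // gND.
Qed.

End Struct.

Section FixSec.
Variables (n k : nat) (pi : 'S_n).
Hypothesis kn : (k <= n)%N.

Lemma comm_perm (s : 'S_n) : s \in 'C[pi]%g -> forall x, s (pi x) = pi (s x).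
Proof. by rewrite cent1E => /eqP E x; rewrite -!permM E. Qed.

Lemma comm_perm_inv (s : 'S_n) : (forall x, s (pi x) = pi (s x)) -> s \in 'C[pi]%g.
Proof. by move=> H; rewrite cent1E; apply/eqP/permP => x; rewrite !permM H. Qed.

Lemma Psi_fix (s : 'S_n) (r : {ffun 'I_k -> 'I_n}) :
  (forall a, pi (r a) = r a) -> s \in 'C[pi]%g -> conj_act pi (Psi s r) == Psi s r.
Proof.
move=> Hr Hs; rewrite conj_fixE; apply/forallP => i; apply/forallP => j; rewrite !mxE.
have Er : forall x, rinv r (pi x) = rinv r x.
  move=> x; rewrite /rinv; apply: eq_pick => a /=.
  by rewrite -{1}Hr (inj_eq (@perm_inj _ pi)).
have Es : forall y, (s^-1)%g (pi y) = pi ((s^-1)%g y).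
  move=> y; rewrite -{1}(permKV s y) -comm_perm // permK //.
by rewrite /psib !Er Es Er (comm_perm Hs) (inj_eq (@perm_inj _ pi)).
Qed.

Lemma fix_sums (A : mxF2 n) : conj_act pi A == A ->
  (forall i, rsum A (pi i) = rsum A i) /\ (forall j, csum A (pi j) = csum A j).
Proof.
rewrite conj_fixE => H.
have E : forall i j, A (pi i) (pi j) = A i j.
  by move=> i j; move/forallP/(_ i)/forallP/(_ j)/eqP: H.
split => x.
  rewrite /rsum (reindex_inj (@perm_inj _ pi)) /=; apply: eq_bigr => j _; by rewrite E.
rewrite /csum (reindex_inj (@perm_inj _ pi)) /=; apply: eq_bigr => j _; by rewrite E.
Qed.

Definition Fx : pred 'I_n := fun i => pi i == i.
Definition InjFix := [set f : {ffun 'I_k -> 'I_n} in ffun_on Fx | injectiveb f].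
Definition Dom := setX 'C[pi]%g InjFix.
Definition PsiP (p : 'S_n * {ffun 'I_k -> 'I_n}) := Psi p.1 p.2.

Lemma H_perm (A : mxF2 n) : A \in H n k ->
  perm_eq (row_sums A) (eta_target n k) /\ perm_eq (col_sums A) (theta_target n k).
Proof.
rewrite inE => /and3P [_ E T].
by rewrite /Defs.eta sort_geq_perm ?eta_sorted // in E; rewrite /theta sort_geq_perm ?theta_sorted // in T.
Qed.

Lemma F_Dom (A : mxF2 n) : A \in H n k -> conj_act pi A == A -> exists2 p, p \in Dom & A = PsiP p.
Proof.
move=> AH Afix; have [He Ht] := H_perm AH.
have [s [r [inj EA]]] := struct_ex kn He Ht.
have [Rs Cs] := fix_sums Afix.
have Hr : forall a, pi (r a) = r a.
  move=> a; apply: (rs_uniq kn He (ltn_ord a)); rewrite ?Rs EA rsPsi_r //.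
have Hsr : forall a, pi (s (r a)) = s (r a).
  move=> a; apply: (cs_uniq kn Ht (ltn_ord a)); rewrite ?Cs EA csPsi_r //.
have Hc : forall x, s (pi x) = pi (s x).
  move=> x; case: (boolP (x \in codom r)) => [/codomP [a ->]|Hx].
    by rewrite Hr Hsr.
  have Hpx : pi x \notin codom r.
    apply/negP => /codomP [a Ea]; move: Hx; by rewrite -(permK pi x) Ea -{1}(Hr a) permK codom_f.
  have := fix_sums Afix; move: Afix; rewrite conj_fixE => /forallP/(_ x)/forallP/(_ (s x))/eqP E _.
  have : (A (pi x) (pi (s x)) != 0)%R by rewrite E EA Psi_ne0 psib_s rinv_None.
  rewrite EA Psi_ne0 /psib rinv_None // => /eqP E2; by rewrite E2.
exists (s, r); last by [].
rewrite inE /= comm_perm_inv //= inE; apply/andP; split.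
  by apply/ffun_onP => a; rewrite /Fx unfold_in /= Hr.
exact/injectiveP.
Qed.

Lemma PsiP_inj : {in Dom &, injective PsiP}.
Proof.
move=> [s r] [s' r'] /setXP [_ Hr] /setXP [_ Hr'] /= E.
move: Hr Hr'; rewrite !inE => /andP [_ /injectiveP inj] /andP [_ /injectiveP inj'].
rewrite /PsiP /= in E.
have He := Psi_rows s inj; have Ht := Psi_cols s inj.
have Er : r = r'.
  apply/ffunP => a; apply: (rs_uniq kn He (ltn_ord a)); first by rewrite rsPsi_r.
  by rewrite E rsPsi_r.
subst r'; congr pair; apply/permP => x.
case: (boolP (x \in codom r)) => [/codomP [a ->]|Hx].
  apply: (cs_uniq kn Ht (ltn_ord a)); first by rewrite csPsi_r.
  by rewrite E csPsi_r.
have : (Psi s r x (s x) != 0)%R by rewrite Psi_ne0 psib_s rinv_None.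
by rewrite E Psi_ne0 /psib rinv_None // => /eqP.
Qed.

Lemma card_Fx : #|Fx| = (n - #|supp pi|)%N.
Proof.
have := cardC Fx; rewrite card_ord => E.
have -> : #|supp pi| = #|[predC Fx]| by apply: eq_card => i; rewrite !inE.
by rewrite -[X in X - _]E addnK.
Qed.

Lemma card_F : #|[set A in H n k | conj_act pi A == A]| = (#|'C[pi]%g| * (n - #|supp pi|) ^_ k)%N.
Proof.
have -> : [set A in H n k | conj_act pi A == A] = PsiP @: Dom.
  apply/setP => A; rewrite inE; apply/andP/imsetP => [[AH Af]|[p Hp ->]].
    exact: F_Dom.
  case: p Hp => s r /setXP [Hs Hr] /=; move: (Hr); rewrite inE => /andP [/ffun_onP Hf /injectiveP inj].
  split; first exact: Psi_H.
  apply: Psi_fix => // a; have := Hf a; by rewrite /Fx unfold_in /= => /eqP.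
rewrite card_in_imset; last exact: PsiP_inj.
by rewrite cardsX card_inj_ffuns_on card_ord card_Fx.
Qed.

End FixSec.

Unset Implicit Arguments.
Local Open Scope ring_scope.

Theorem mainTheorem5 (n k : nat) (pi : 'S_n) : (k <= n)%N ->
  chi_beta k pi = (#|'C[pi]%g| * (n - #|supp pi|) ^_ k)%N%:R /\
  chi_beta k pi = ((n - #|supp pi|) ^_ k)%:R * chi_conj pi.
Proof.
move=> kn; rewrite chi_beta_card card_F //; split => //.
by rewrite chi_conj_card natrM mulrC.
Qed.
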